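(* Let $K$ be a field, let $A=\{{\bf a}_1,\ldots,{\bf a}_n\}\subset\mathbb{Z}^m$ be a vector configuration with $\mathbb{N}A$ pointed, and let $I_A\subset K[x_1,\ldots,x_n]$ be its toric ideal. Let $s\ge 1$ be an integer. Then: (i) There exist toric ideals $I_{A_1},\ldots,I_{A_s}\subset K[x_1,\ldots,x_n]$ with $I_{A_i}\neq I_A$ for every $1\le i\le s$ such that $I_A=I_{A_1}+\cdots+I_{A_s}$ if and only if there exist a set $C\subset \ker_{\mathbb{Z}}(A)$ such that $\{B({\bf u})\mid {\bf u}\in C\}$ is a minimal system of binomial generators of $I_A$, and sets $C_1,\ldots,C_s$ with $C=\bigcup_{i=1}^s C_i$ and $\mathrm{span}_{\mathbb{Q}}(C_i)\subsetneqq \ker_{\mathbb{Q}}(A)$ for every $1\le i\le s$. (ii) There exist toric ideals $I_{A_1},\ldots,I_{A_s}\subset K[x_1,\ldots,x_n]$ with $I_{A_i}\neq I_A$ for every $1\le i\le s$ such that $I_A=\mathrm{rad}(I_{A_1}+\cdots+I_{A_s})$ if and only if there exist a set $C\subset \ker_{\mathbb{Z}}(A)$ such that $\{B({\bf u})\mid {\bf u}\in C\}$ is a minimal system of binomial generators of $I_A$ up to radical, and sets $C_1,\ldots,C_s$ with $C=\bigcup_{i=1}^s C_i$ and $\mathrm{span}_{\mathbb{Q}}(C_i)\subsetneqq \ker_{\mathbb{Q}}(A)$ for every $1\le i\le s$.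
   Context: For a vector configuration $A=\{{\bf a}_1,\ldots,{\bf a}_n\}\subset\mathbb{Z}^m$, $\ker_{\mathbb{Q}}(A)=\{{\bf u}\in\mathbb{Q}^n\mid u_1{\bf a}_1+\cdots+u_n{\bf a}_n={\bf 0}\}$ and $\ker_{\mathbb{Z}}(A)=\ker_{\mathbb{Q}}(A)\cap\mathbb{Z}^n$; $\mathbb{N}A$ is pointed means $\ker_{\mathbb{Z}}(A)\cap\mathbb{N}^n=\{{\bf 0}\}$. The toric ideal $I_A$ is the kernel of the $K$-algebra map $K[x_1,\ldots,x_n]\to K[t_1^{\pm1},\ldots,t_m^{\pm1}]$, $x_i\mapsto {\bf t}^{{\bf a}_i}$; it is generated by the binomials $B({\bf u})={\bf x}^{{\bf u}^+}-{\bf x}^{{\bf u}^-}$, ${\bf u}\in\ker_{\mathbb{Z}}(A)$, where ${\bf u}^+,{\bf u}^-\in\mathbb{N}^n$ are the positive and negative parts of ${\bf u}={\bf u}^+-{\bf u}^-$. A ''toric ideal in $K[x_1,\ldots,x_n]$'' means $I_{A'}$ for some configuration $A'$ of $n$ vectors in some $\mathbb{Z}^{m'}$ with $\mathbb{N}A'$ pointed. For a set $C\subset\mathbb{Z}^n$, $\mathrm{span}_{\mathbb{Q}}(C)$ is the $\mathbb{Q}$-span of $C$. A set $S$ of binomials is a minimal system of binomial generators of $I_A$ up to radical if $\mathrm{rad}(S)=I_A$ and no proper subset $S'\subsetneqq S$ satisfies $\mathrm{rad}(S')=I_A$; a minimal system of binomial generators of $I_A$ is a set of binomials generating $I_A$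 none of whose proper subsets generates $I_A$. *)

(* Defs.v *)
From HB Require Import structures.
From mathcomp Require Import all_boot all_order all_algebra.
From mathcomp Require Export mpoly.
Set Implicit Arguments. Unset Strict Implicit. Unset Printing Implicit Defensive.
Import Order.TTheory GRing.Theory Num.Theory.
Local Open Scope ring_scope.

(* A vector configuration A = {a_1,...,a_n} in Z^m is an m x n integer
   matrix whose columns are the a_i.  Vectors of Z^n / Q^n are functions
   on 'I_n. *)

Definition Aapp (m n : nat) (A : 'M[int]_(m, n)) (u : 'I_n -> int) (j : 'I_m) : int :=
  \sum_(i < n) A j i * u i.

Definition kerZ (m n : nat) (A : 'M[int]_(m, n)) (u : 'I_n -> int) : Prop :=
  forall j : 'I_m, Aapp A u j = 0.

Definition kerQ (m n : nat) (A : 'M[int]_(m, n)) (v : 'I_n -> rat) : Prop :=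
  forall j : 'I_m, \sum_(i < n) (A j i)%:~R * v i = 0.

(* NA is pointed: ker_Z(A) cap N^n = {0} *)
Definition pointed (m n : nat) (A : 'M[int]_(m, n)) : Prop :=
  forall u : 'I_n -> nat, kerZ A (fun i => (u i)%:Z) -> forall i, u i = 0%N.

Definition mexp (n : nat) (mu : 'X_{1..n}) : 'I_n -> int := fun i => (mu i)%:Z.

(* The toric ideal I_A = kernel of x_i |-> t^{a_i} from K[x] to
   K[t^{+-1}] = K[Z^m]: the image of f = sum_mu f_mu x^mu is
   sum_mu f_mu t^{A mu}, which is zero iff, for every b in Z^m, the sum of
   the coefficients f_mu over the monomials mu with A mu = b vanishes. *)
Definition toric (K : fieldType) (m n : nat) (A : 'M[int]_(m, n))
    (f : {mpoly K[n]}) : Prop :=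
  forall b : 'I_m -> int,
    \sum_(mu <- msupp f | [forall j, Aapp A (mexp mu) j == b j]) f@_mu = 0.

Definition same_set (T : Type) (P Q : T -> Prop) : Prop := forall x, P x <-> Q x.
Definition subset_of (T : Type) (P Q : T -> Prop) : Prop := forall x, P x -> Q x.

Definition is_toric_ideal (K : fieldType) (n : nat) (J : {mpoly K[n]} -> Prop) : Prop :=
  exists (m' : nat) (A' : 'M[int]_(m', n)), pointed A' /\ same_set J (toric A').

Definition ideal_gen (K : fieldType) (n : nat) (S : {mpoly K[n]} -> Prop)
    (f : {mpoly K[n]}) : Prop :=
  exists (k : nat) (h g : 'I_k -> {mpoly K[n]}),
    (forall l, S (g l)) /\ f = \sum_(l < k) h l * g l.

Definition sum_ideals (K : fieldType) (n s : nat) (I : 'I_s -> {mpoly K[n]} -> Prop)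
    (f : {mpoly K[n]}) : Prop :=
  exists g : 'I_s -> {mpoly K[n]}, (forall i, I i (g i)) /\ f = \sum_(i < s) g i.

Definition radI (K : fieldType) (n : nat) (J : {mpoly K[n]} -> Prop)
    (f : {mpoly K[n]}) : Prop :=
  exists k : nat, J (f ^+ k).

Definition posp (n : nat) (u : 'I_n -> int) : 'X_{1..n} :=
  [multinom (if (0 <= u i)%R then absz (u i) else 0%N) | i < n].
Definition negp (n : nat) (u : 'I_n -> int) : 'X_{1..n} :=
  [multinom (if (u i < 0)%R then absz (u i) else 0%N) | i < n].

Definition binom (K : fieldType) (n : nat) (u : 'I_n -> int) : {mpoly K[n]} :=
  'X_[posp u] - 'X_[negp u].

Definition binoms (K : fieldType) (n : nat) (C : ('I_n -> int) -> Prop)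
    (p : {mpoly K[n]}) : Prop :=
  exists u, C u /\ p = binom K u.

Definition min_bin_gens (K : fieldType) (n : nat) (S J : {mpoly K[n]} -> Prop) : Prop :=
  same_set (ideal_gen S) J /\
  forall S', subset_of S' S -> same_set (ideal_gen S') J -> subset_of S S'.

Definition min_bin_gens_rad (K : fieldType) (n : nat) (S J : {mpoly K[n]} -> Prop) : Prop :=
  same_set (radI (ideal_gen S)) J /\
  forall S', subset_of S' S -> same_set (radI (ideal_gen S')) J -> subset_of S S'.

Definition spanQ (n : nat) (C : ('I_n -> int) -> Prop) (v : 'I_n -> rat) : Prop :=
  exists (k : nat) (c : 'I_k -> rat) (w : 'I_k -> 'I_n -> int),
    (forall l, C (w l)) /\ forall i, v i = \sum_(l < k) c l * (w l i)%:~R.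

Definition span_proper (m n : nat) (A : 'M[int]_(m, n)) (C : ('I_n -> int) -> Prop) : Prop :=
  subset_of (spanQ C) (kerQ A) /\ exists v, kerQ A v /\ ~ spanQ C v.

(* Main.v *)
Require Import Defs.
From HB Require Import structures.
From mathcomp Require Import all_boot all_order all_algebra.
From mathcomp Require Import mpoly.
From Stdlib Require Import Classical_Prop ClassicalEpsilon.
Import Order.TTheory GRing.Theory Num.Theory.
Local Open Scope ring_scope.
Set Implicit Arguments. Unset Strict Implicit. Unset Printing Implicit Defensive.
From mathcomp Require Import zify ring.
Section IG.
Variables (K : fieldType) (n : nat).
Implicit Types (S T : {mpoly K[n]} -> Prop) (f g h : {mpoly K[n]}).

Lemma ig_closed S (J : {mpoly K[n]} -> Prop) :
  J 0 -> (forall f g, J f -> J g -> J (f + g)) -> (forall h f, J f -> J (h * f)) ->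
  (forall p, S p -> J p) -> forall f, ideal_gen S f -> J f.
Proof.
move=> J0 JD JM JS f [k [hh [gg [Hg ->]]]].
elim/big_ind: _ => //; move=> l _; apply: JM; exact: JS.
Qed.

Lemma ig_gen S p : S p -> ideal_gen S p.
Proof.
move=> Sp; exists 1%N, (fun _ => 1), (fun _ => p); split => //.
by rewrite big_ord1 mul1r.
Qed.

Lemma ig0 S : ideal_gen S 0.
Proof. by exists 0%N, (fun _ => 0), (fun _ => 0); split; [case | rewrite big_ord0]. Qed.

Lemma igD S f g : ideal_gen S f -> ideal_gen S g -> ideal_gen S (f + g).
Proof.
move=> [k1 [h1 [g1 [H1 ->]]]] [k2 [h2 [g2 [H2 ->]]]].
pose hh := (fun l : 'I_(k1+k2) => match split l with inl i => h1 i | inr j => h2 j end).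
pose gg := (fun l : 'I_(k1+k2) => match split l with inl i => g1 i | inr j => g2 j end).
exists (k1 + k2)%N, hh, gg; split.
  by move=> l; rewrite /gg; case: (split l) => i; [apply: H1 | apply: H2].
rewrite big_split_ord /=; congr (_ + _); apply: eq_bigr => i _; rewrite /hh /gg.
  by have := unsplitK (inl _ i : 'I_k1 + 'I_k2); rewrite /= => ->.
by have := unsplitK (inr _ i : 'I_k1 + 'I_k2); rewrite /= => ->.
Qed.

Lemma igM S h f : ideal_gen S f -> ideal_gen S (h * f).
Proof.
move=> [k [hh [gg [Hg ->]]]]; exists k, (fun l => h * hh l), gg; split => //.
by rewrite mulr_sumr; apply: eq_bigr => l _; rewrite mulrA.
Qed.

Lemma ig_trans S T f : (forall p, S p -> ideal_gen T p) -> ideal_gen S f -> ideal_gen T f.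
Proof.
move=> H; apply: ig_closed => //; [exact: ig0 | exact: igD | exact: igM].
Qed.

Lemma ig_mono S T f : (forall p, S p -> T p) -> ideal_gen S f -> ideal_gen T f.
Proof. by move=> H; apply: ig_trans => p /H; apply: ig_gen. Qed.

Lemma ig_ext S T : same_set S T -> same_set (ideal_gen S) (ideal_gen T).
Proof. by move=> H f; split; apply: ig_mono => p /H. Qed.

Lemma rad_ext (J J' : {mpoly K[n]} -> Prop) : same_set J J' -> same_set (radI J) (radI J').
Proof. by move=> H f; split => -[k Hk]; exists k; apply/H. Qed.

Lemma ig_sum S (I : Type) (r : seq I) (P : pred I) (F : I -> {mpoly K[n]}) :
  (forall i, P i -> ideal_gen S (F i)) -> ideal_gen S (\sum_(i <- r | P i) F i).
Proof. move=> H; elim/big_ind: _ => //; [exact: ig0 | exact: igD]. Qed.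

Lemma ig_decomp (s : nat) S (Si : 'I_s -> {mpoly K[n]} -> Prop) f :
  (forall p, S p -> exists i, Si i p) -> ideal_gen S f ->
  exists g : 'I_s -> {mpoly K[n]}, (forall i, ideal_gen (Si i) (g i)) /\ f = \sum_(i < s) g i.
Proof.
move=> HS [k [hh [gg [Hg ->]]]].
have H l : exists i, Si i (gg l) by apply: HS.
pose sel l := proj1_sig (constructive_indefinite_description _ (H l)).
have Hsel l : Si (sel l) (gg l) by rewrite /sel; case: constructive_indefinite_description.
exists (fun i => \sum_(l < k | sel l == i) hh l * gg l); split.
  move=> i; apply: ig_sum => l /eqP <-; apply: igM; exact: ig_gen.
by rewrite (partition_big sel xpredT) //=.
Qed.

End IG.

Section MinSub.
Variable T : eqType.
Variable P : (T -> Prop) -> Prop.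
Hypothesis Pext : forall S1 S2, (forall x, S1 x <-> S2 x) -> P S1 -> P S2.

Lemma sub_filter (s : seq T) (Q : T -> Prop) :
  exists s', (forall y, y \in s' <-> (y \in s /\ Q y)) /\ (size s' <= size s)%N /\
    (forall x, x \in s -> ~ Q x -> (size s' < size s)%N).
Proof.
elim: s => [|a s [s' [H1 [H2 H3]]]].
  by exists [::]; split => //= y; split => //; case.
case: (classic (Q a)) => Qa.
  exists (a :: s'); split; [|split].
  - move=> y; rewrite !inE; split.
      by case/orP => [/eqP ->|/H1 [-> ?]]; split => //; rewrite ?eqxx ?orbT.
    by case=> /orP [/eqP ->|ys] Qy; rewrite ?eqxx // (proj2 (H1 y)) ?orbT.
  - by rewrite /= ltnS.
  - move=> x; rewrite inE => /orP [/eqP -> /(_ Qa) []|xs nQ] /=.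
    by rewrite ltnS; exact: H3 x xs nQ.
exists s'; split; last split => /=; first last.
- by move=> x _ _; rewrite ltnS.
- by apply: leqW.
move=> y; rewrite inE; split.
  by move/H1 => [-> ?]; rewrite orbT.
by case=> /orP [/eqP -> //|ys] Qy; apply/H1.
Qed.

Lemma min_sub (s : seq T) : P (fun x => x \in s) ->
  exists S : T -> Prop, (forall x, S x -> x \in s) /\ P S /\
    (forall S', (forall x, S' x -> S x) -> P S' -> forall x, S x -> S' x).
Proof.
move: {2}(size s) (leqnn (size s)) => N; elim: N s => [|N IH] s Hs PS.
  exists (fun x => x \in s); split => // ; split => // S' _ _ x.
  by case: s Hs {PS}.
case: (classic (forall S', (forall x, S' x -> x \in s) -> P S' -> forall x, x \in s -> S' x)) => H.
  by exists (fun x => x \in s); split.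
have [S' [HS' [PS' [x [xs nS'x]]]]] : exists S', (forall x, S' x -> x \in s) /\ P S' /\
    exists x, x \in s /\ ~ S' x.
  apply: NNPP => H'; apply: H => S' H1 H2 x xs; apply: NNPP => nS.
  by apply: H'; exists S'; split => //; split => //; exists x.
have [s' [H1 [H2 H3]]] := sub_filter s S'.
have Ps' : P (fun y => y \in s').
  apply: Pext PS' => y; rewrite H1; split; [move=> Sy; split => //; exact: HS' | by case].
have := IH s'; case.
- by rewrite -ltnS; exact: leq_trans (H3 x xs nS'x) Hs.
- exact: Ps'.
move=> S [HS [PS2 Hmin]]; exists S; split => //.
by move=> y /HS /H1 [].
Qed.
End MinSub.
Section Toric.
Variables (K : fieldType) (m n : nat) (A : 'M[int]_(m, n)).
Implicit Types (f g h : {mpoly K[n]}).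

Definition key (mu : 'X_{1..n}) : {ffun 'I_m -> int} := [ffun j => Aapp A (mexp mu) j].
Definition tsum (s : seq 'X_{1..n}) f (b : {ffun 'I_m -> int}) :=
  \sum_(mu <- s | key mu == b) f@_mu.

Lemma Aapp_add a b j : Aapp A (mexp (a + b)%MM) j = Aapp A (mexp a) j + Aapp A (mexp b) j.
Proof.
by rewrite /Aapp -big_split; apply: eq_bigr => i _; rewrite /mexp mnmDE PoszD mulrDr.
Qed.

Lemma keyD a b : key (a + b)%MM = key a + key b.
Proof. by apply/ffunP => j; rewrite !ffunE Aapp_add. Qed.

Lemma cond_key (b : 'I_m -> int) mu :
  [forall j, Aapp A (mexp mu) j == b j] = (key mu == [ffun j => b j]).
Proof.
apply/forallP/eqP => [H|H j].
  by apply/ffunP => j; rewrite !ffunE; apply/eqP.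
by have := congr1 (fun F : {ffun 'I_m -> int} => F j) H; rewrite !ffunE => ->.
Qed.

Lemma toricE f : toric A f <-> forall b, tsum (msupp f) f b = 0.
Proof.
split => H b.
  have E := H (fun j => b j); rewrite /tsum -[X in _ = X]E; apply: eq_bigl => mu.
  by rewrite cond_key; congr (_ == _); apply/ffunP => j; rewrite ffunE.
have E := H [ffun j => b j]; rewrite /tsum in E; rewrite -[X in _ = X]E.
by apply: eq_bigl => mu; rewrite cond_key.
Qed.

Lemma tsum_sub s f b : uniq s -> {subset msupp f <= s} -> tsum s f b = tsum (msupp f) f b.
Proof.
move=> us sub; rewrite /tsum (bigID (fun mu => mu \in msupp f)) /=.
rewrite [X in _ + X]big1 ?addr0; last by move=> mu /andP [_ /memN_msupp_eq0].
rewrite (eq_bigl (fun mu => (mu \in msupp f) && (key mu == b))); last by move=> mu; rewrite andbC.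
rewrite -big_filter_cond; apply: perm_big; apply: uniq_perm.
- exact: filter_uniq.
- exact: msupp_uniq.
by move=> mu; rewrite mem_filter; apply/andP/idP => [[]//|H]; split => //; apply: sub.
Qed.

Lemma tsumD s f g b : tsum s (f + g) b = tsum s f b + tsum s g b.
Proof. by rewrite /tsum -big_split; apply: eq_bigr => mu _; rewrite mcoeffD. Qed.

Lemma tsumZ s c f b : tsum s (c *: f) b = c * tsum s f b.
Proof. by rewrite /tsum mulr_sumr; apply: eq_bigr => mu _; rewrite mcoeffZ. Qed.

Lemma toric0 : toric A (0 : {mpoly K[n]}).
Proof. by apply/toricE => b; rewrite /tsum big1 // => mu _; rewrite mcoeff0. Qed.

Lemma toricD f g : toric A f -> toric A g -> toric A (f + g).
Proof.
move=> /toricE Hf /toricE Hg; apply/toricE => b.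
have us : uniq (undup (msupp f ++ msupp g)) by apply: undup_uniq.
rewrite -(tsum_sub _ us); last by move=> mu /msuppD_le; rewrite mem_undup.
rewrite tsumD (tsum_sub _ us) ?Hf; last by move=> mu; rewrite mem_undup mem_cat => ->.
by rewrite (tsum_sub _ us) ?Hg ?addr0 // => mu; rewrite mem_undup mem_cat => ->; rewrite orbT.
Qed.

Lemma toricZ c f : toric A f -> toric A (c *: f).
Proof.
move=> /toricE Hf; apply/toricE => b.
rewrite -(tsum_sub _ (msupp_uniq f)); last exact: msuppZ_le.
by rewrite tsumZ Hf mulr0.
Qed.

Lemma toricXM f nu : toric A f -> toric A (f * 'X_[nu]).
Proof.
move=> /toricE Hf; apply/toricE => b.
rewrite /tsum (perm_big _ (msuppMX f nu)) big_map.
rewrite -[X in _ = X](Hf (b - key nu)) /tsum; apply: eq_big => mu.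
  rewrite keyD; apply/eqP/eqP => [<-|->]; first by rewrite addrC addKr.
  by rewrite addrC subrK.
by move=> _; rewrite mcoeffMX.
Qed.

Lemma toricM h f : toric A f -> toric A (h * f).
Proof.
move=> Hf; rewrite (mpolyE h) mulr_suml.
elim/big_ind: _ => //; [exact: toric0 | exact: toricD|].
move=> mu _; rewrite -scalerAl mulrC; apply: toricZ; exact: toricXM.
Qed.

Lemma ig_toric (S : {mpoly K[n]} -> Prop) f :
  (forall p, S p -> toric A p) -> ideal_gen S f -> toric A f.
Proof.
move=> H; apply: ig_closed => //; [exact: toric0 | exact: toricD | exact: toricM].
Qed.

Lemma binom_diff (u : 'I_n -> int) i : (mexp (posp u) i) - (mexp (negp u) i) = u i.
Proof.
rewrite /mexp /posp /negp !mnmE; case: (leP 0 (u i)) => h.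
  by rewrite subr0 gez0_abs.
by rewrite sub0r ltz0_abs // opprK.
Qed.

Lemma Aapp_binom (u : 'I_n -> int) j :
  Aapp A (mexp (posp u)) j - Aapp A (mexp (negp u)) j = Aapp A u j.
Proof.
by rewrite /Aapp -sumrB; apply: eq_bigr => i _; rewrite -mulrBr binom_diff.
Qed.

Lemma binom_tsum (u : 'I_n -> int) b : posp u != negp u ->
  tsum (msupp (binom K u)) (binom K u) b =
  (if key (posp u) == b then 1 else 0) + (if key (negp u) == b then -1 else 0).
Proof.
move=> Hpq.
rewrite -(tsum_sub (s := [:: posp u; negp u])); first last.
- by move=> mu /msuppB_le; rewrite mem_cat !msuppX !inE.
- by rewrite /= inE Hpq.
rewrite /tsum !big_cons big_nil addr0 /binom !mcoeffB !mcoeffX !eqxx.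
rewrite [negp u == posp u]eq_sym (negbTE Hpq) /=.
by case: (key (posp u) == b); case: (key (negp u) == b); rewrite ?subr0 ?sub0r ?addr0 ?add0r.
Qed.

Lemma binom_toric (u : 'I_n -> int) : kerZ A u -> toric A (binom K u).
Proof.
move=> Hu; apply/toricE => b.
case: (eqVneq (posp u) (negp u)) => Hpq.
  by rewrite /tsum big1 // => mu _; rewrite /binom Hpq subrr mcoeff0.
rewrite binom_tsum //.
have -> : key (posp u) = key (negp u).
  by apply/ffunP => j; rewrite !ffunE; apply/eqP; rewrite -subr_eq0 Aapp_binom Hu.
by case: (_ == b); rewrite ?addr0 ?subrr.
Qed.

Lemma toric_binom (u : 'I_n -> int) : toric A (binom K u) -> kerZ A u.
Proof.
move=> /toricE H j.
case: (eqVneq (posp u) (negp u)) => Hpq.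
  by rewrite -Aapp_binom Hpq subrr.
have := H (key (posp u)); rewrite binom_tsum // eqxx.
case: eqP => Hk H0.
  have := congr1 (fun F : {ffun 'I_m -> int} => F j) Hk; rewrite !ffunE => E.
  by rewrite -Aapp_binom E subrr.
by move: H0; rewrite addr0 => /eqP; rewrite oner_eq0.
Qed.

End Toric.
Lemma sum_partition (T V : eqType) (M : nmodType) (s : seq T) (k : T -> V) (P : pred T)
  (F : T -> M) :
  \sum_(x <- s | P x) F x = \sum_(v <- undup (map k s)) \sum_(x <- s | P x && (k x == v)) F x.
Proof.
rewrite -(exchange_big_dep xpredT) //=.
rewrite big_seq_cond [RHS]big_seq_cond; apply: eq_bigr => x /andP [xs _].
rewrite (eq_bigl (pred1 (k x))); last by move=> v; rewrite /= eq_sym.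
rewrite big_const_seq count_uniq_mem ?undup_uniq // mem_undup map_f //=.
by rewrite addr0.
Qed.

Lemma Aapp_sub (m n : nat) (A : 'M[int]_(m, n)) (a b : 'X_{1..n}) j :
  Aapp A (fun i => mexp a i - mexp b i) j = Aapp A (mexp a) j - Aapp A (mexp b) j.
Proof. by rewrite /Aapp -sumrB; apply: eq_bigr => i _; rewrite mulrBr. Qed.

Lemma key_transfer (m m' n : nat) (A : 'M[int]_(m, n)) (A' : 'M[int]_(m', n)) :
  (forall u, kerZ A' u -> kerZ A u) ->
  forall a b, key A' a = key A' b -> key A a = key A b.
Proof.
move=> H a b E; have : kerZ A (fun i => mexp a i - mexp b i).
  apply: H => j; rewrite Aapp_sub.
  have := congr1 (fun F : {ffun 'I_m' -> int} => F j) E; rewrite !ffunE => ->.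
  by rewrite subrr.
move=> Hk; apply/ffunP => j; rewrite !ffunE; apply/eqP; rewrite -subr_eq0 -Aapp_sub.
by apply/eqP; apply: Hk.
Qed.

Lemma toric_sub (K : fieldType) (m m' n : nat) (A : 'M[int]_(m, n)) (A' : 'M[int]_(m', n))
  (f : {mpoly K[n]}) :
  (forall u, kerZ A' u -> kerZ A u) -> toric A' f -> toric A f.
Proof.
move=> H /toricE Hf; apply/toricE => b; rewrite /tsum.
rewrite (sum_partition _ (key A')) big1_seq // => v /=.
rewrite mem_undup => /mapP [mu0 mu0s ->].
have T := key_transfer H.
case: (eqVneq (key A mu0) b) => Hb.
  transitivity (\sum_(mu <- msupp f | key A' mu == key A' mu0) f@_mu); last exact: Hf.
  rewrite [LHS]big_seq_cond [RHS]big_seq_cond; apply: eq_bigl => mu.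
  case ms: (mu \in msupp f) => //=.
  apply/andP/idP => [[_ ->] // | E]; split => //; rewrite -Hb; apply/eqP; apply: T; exact/eqP.
apply: big1 => mu /andP [E1 /eqP E2].
by move: E1; rewrite (T _ _ E2) (negbTE Hb).
Qed.

Section Gen.
Variables (K : fieldType) (m n : nat) (A : 'M[int]_(m, n)).

Definition Dset (p : {mpoly K[n]}) : Prop :=
  exists a b, key A a = key A b /\ p = 'X_[a] - 'X_[b].

Lemma toric_Dgen f : toric A f -> ideal_gen Dset f.
Proof.
move=> /toricE Hf; set s := msupp f.
pose R v := nth 0%MM s (find (fun x => key A x == v) s).
have HR mu : mu \in s -> key A (R (key A mu)) = key A mu.
  move=> ms; apply/eqP; rewrite /R; apply: (nth_find _ (a := fun x => key A x == key A mu)).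
  by apply/hasP; exists mu.
have -> : f = \sum_(mu <- s) f@_mu *: ('X_[mu] - 'X_[R (key A mu)]) +
              \sum_(mu <- s) f@_mu *: 'X_[R (key A mu)].
  by rewrite -big_split /= [LHS]mpolyE; apply: eq_bigr => mu _; rewrite -scalerDr subrK.
rewrite [X in _ + X](sum_partition _ (key A)) /=.
rewrite [X in _ + X]big1 ?addr0; last first.
  move=> v _; rewrite (eq_bigr (fun mu => f@_mu *: 'X_[R v])); last first.
    by move=> mu /eqP ->.
  by rewrite -scaler_suml; have := Hf v; rewrite /tsum => ->; rewrite scale0r.
rewrite big_seq; apply: ig_sum => mu ms; rewrite -mul_mpolyC; apply: igM; apply: ig_gen.
by exists mu, (R (key A mu)); split => //; rewrite HR.
Qed.
End Gen.
Section Dickson.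
Variable T : Type.

Lemma dickson (cs : seq (T -> nat)) (P : T -> Prop) :
  exists F : seq T, (forall x, List.In x F -> P x) /\
    forall y, P y -> exists x, List.In x F /\ all (fun c => c x <= c y)%N cs.
Proof.
elim: cs P => [|c cs IH] P.
  case: (classic (exists y, P y)) => [[y0 Py0]|nP].
    by exists [:: y0]; split => [x [<-|[]] //|y _]; exists y0; split => //; left.
  by exists [::]; split => // y Py; case: nP; exists y.
have [FQ [FQP FQd]] := IH P.
pose cmax := foldr (fun x acc => maxn (c x) acc) 0%N FQ.
have Hmax x : List.In x FQ -> (c x <= cmax)%N.
  rewrite /cmax; elim: (FQ) => [[]|z l IHl] /= [->|/IHl]; first exact: leq_maxl.
  by move=> H; apply: leq_trans H (leq_maxr _ _).
have Low : forall N, exists G : seq T, (forall x, List.In x G -> P x) /\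
    forall y, P y -> (c y < N)%N -> exists x, List.In x G /\ all (fun c => c x <= c y)%N (c :: cs).
  elim=> [|N [G [GP Gd]]].
    by exists [::]; split => // y _.
  have [FN [FNP FNd]] := IH (fun y => P y /\ c y = N).
  exists (G ++ FN); split.
    by move=> x /(List.in_app_or G FN x) [/GP|/FNP []].
  move=> y Py; rewrite ltnS leq_eqVlt => /orP [/eqP Ecy|ltcy].
    have [x [xF xd]] := FNd y (conj Py Ecy).
    exists x; split; first by apply: List.in_or_app; right.
    rewrite /= xd andbT; have [_ ->] := FNP x xF; by rewrite Ecy.
  have [x [xG xd]] := Gd y Py ltcy.
  by exists x; split => //; apply: List.in_or_app; left.
have [G [GP Gd]] := Low cmax.
exists (FQ ++ G); split.
  by move=> x /(List.in_app_or FQ G x) [/FQP|/GP].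
move=> y Py; case: (leqP cmax (c y)) => h.
  have [x [xF xd]] := FQd y Py.
  exists x; split; first by apply: List.in_or_app; left.
  by rewrite /= xd andbT; apply: leq_trans (Hmax x xF) h.
have [x [xG xd]] := Gd y Py h.
by exists x; split => //; apply: List.in_or_app; right.
Qed.
End Dickson.

Lemma memIn (T : eqType) (x : T) (s : seq T) : x \in s <-> List.In x s.
Proof.
elim: s => [|y s IH] //=; rewrite inE; split.
  by case/orP => [/eqP ->|/IH]; [left | right].
by case => [->|/IH ->]; rewrite ?eqxx ?orbT.
Qed.

Section FG.
Variables (K : fieldType) (m n : nat) (A : 'M[int]_(m, n)).

Lemma binom_split (a b : 'X_{1..n}) :
  'X_[a] - 'X_[b] = 'X_[[multinom minn (a i) (b i) | i < n]] *
     binom K (fun i => mexp a i - mexp b i) :> {mpoly K[n]}.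
Proof.
rewrite /binom mulrBr -!mpolyXD; congr ('X_[_] - 'X_[_]); apply/mnmP => i;
  rewrite !mnmE /mexp addnC.
  by case: ifP => h; lia.
by case: ifP => h; lia.
Qed.

Lemma fin_gen : exists gs : seq {mpoly K[n]},
  (forall q, q \in gs -> exists u, kerZ A u /\ q = binom K u) /\
  same_set (ideal_gen (fun q => q \in gs)) (toric A).
Proof.
pose P (p : 'X_{1..n} * 'X_{1..n}) := key A p.1 = key A p.2 /\ p.1 != p.2.
pose cs := [seq (fun p : 'X_{1..n} * 'X_{1..n} => p.1 i) | i <- enum 'I_n] ++
           [seq (fun p : 'X_{1..n} * 'X_{1..n} => p.2 i) | i <- enum 'I_n].
have [F [FP Fd]] := dickson cs P.
pose gs := [seq binom K (fun i => mexp p.1 i - mexp p.2 i) | p <- F].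
have Hgs q : q \in gs -> exists u, kerZ A u /\ q = binom K u.
  case/mapP => p /memIn /FP [Hk _] ->; eexists; split; last reflexivity.
  move=> j; rewrite Aapp_sub; have := congr1 (fun F : {ffun 'I_m -> int} => F j) Hk.
  by rewrite !ffunE => ->; rewrite subrr.
exists gs; split => // f; split.
  apply: ig_toric => q /Hgs [u [Hu ->]]; exact: binom_toric.
move/toric_Dgen; apply: ig_trans => _ [a [b [Hab ->]]].
have main : forall N (a b : 'X_{1..n}), (mdeg a + mdeg b < N)%N -> key A a = key A b ->
    ideal_gen (fun q => q \in gs) ('X_[a] - 'X_[b] : {mpoly K[n]}).
  elim=> [//|N IH] {Hab}a {}b HN Hab.
  case: (eqVneq a b) => [->|nab]; first by rewrite subrr; apply: ig0.
  have [[a' b'] [xF]] := Fd (a, b) (conj Hab nab).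
  rewrite all_cat !all_map => /andP [/allP H1 /allP H2].
  have la : (a' <= a)%MM.
    apply/forallP => i; have Hi : i \in Finite.enum 'I_n by rewrite -enumT mem_enum.
    exact: (H1 i Hi).
  have lb : (b' <= b)%MM.
    apply/forallP => i; have Hi : i \in Finite.enum 'I_n by rewrite -enumT mem_enum.
    exact: (H2 i Hi).
  have [Hk' nab'] := FP _ xF; rewrite /= in Hk' nab'.
  have Ea : 'X_[a] = 'X_[a - a'] * 'X_[a'] :> {mpoly K[n]} by rewrite -mpolyXD submK.
  have Eb : 'X_[b] = 'X_[b - b'] * 'X_[b'] :> {mpoly K[n]} by rewrite -mpolyXD submK.
  have -> : 'X_[a] - 'X_[b] = 'X_[a - a'] * ('X_[a'] - 'X_[b']) +
      'X_[b'] * ('X_[a - a'] - 'X_[b - b']) :> {mpoly K[n]}.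
    rewrite Ea Eb !mulrBr [_ * 'X_[a - a']]mulrC [_ * 'X_[b - b']]mulrC.
    by rewrite addrA subrK.
  apply: igD; apply: igM.
    rewrite binom_split; apply: igM; apply: ig_gen.
    by apply/mapP; exists (a', b') => //; apply/memIn.
  apply: IH.
    have da := mdegD (a - a') a'; rewrite submK // in da.
    have db := mdegD (b - b') b'; rewrite submK // in db.
    have : (0 < mdeg a' + mdeg b')%N.
      rewrite lt0n; apply: contra nab' => /eqP H.
      have /eqP -> : (a' == 0%MM) by rewrite -mdeg_eq0; apply/eqP; lia.
      by have /eqP -> : (b' == 0%MM) by rewrite -mdeg_eq0; apply/eqP; lia.
    lia.
  have ka := keyD A (a - a') a'; rewrite submK // in ka.
  have kb := keyD A (b - b') b'; rewrite submK // in kb.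
  by apply: (addIr (key A a')); rewrite -ka Hk' -kb.
exact: (main (mdeg a + mdeg b).+1).
Qed.
End FG.
Definition rowv (n : nat) (u : 'I_n -> int) : 'rV[rat]_n := \row_i (u i)%:~R.

Lemma exmax (Q : nat -> Prop) N : Q 0%N -> (forall r, Q r -> (r <= N)%N) ->
  exists r, Q r /\ forall r', Q r' -> (r' <= r)%N.
Proof.
elim: N => [|N IH] Q0 HN.
  by exists 0%N; split => // r' /HN.
case: (classic (Q N.+1)) => QN.
  by exists N.+1; split => // r' /HN.
apply: IH => // r Qr; have := HN r Qr; rewrite leq_eqVlt => /orP [/eqP E|//].
by case: QN; rewrite -E.
Qed.

Lemma sub_colmx (F : fieldType) (k1 k2 n : nat) (M : 'M[F]_(k1, n)) (N : 'M[F]_(k2, n)) :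
  (M <= col_mx M N)%MS.
Proof.
have E : M = row_mx 1%:M 0 *m col_mx M N by rewrite mul_row_col mul1mx mul0mx addr0.
rewrite {1}E; exact: submxMl.
Qed.

Lemma fin_basis (n : nat) (D : ('I_n -> int) -> Prop) :
  exists k (M : 'M[rat]_(k, n)), (forall l, exists w, D w /\ row l M = rowv w) /\
    forall u, D u -> (rowv u <= M)%MS.
Proof.
pose Q r := exists k (M : 'M[rat]_(k, n)),
  (forall l, exists w, D w /\ row l M = rowv w) /\ \rank M = r.
have [r [[k [M [HM rM]]] Hmax]] : exists r, Q r /\ forall r', Q r' -> (r' <= r)%N.
  apply: (@exmax Q n).
    exists 0%N, (0 : 'M[rat]_(0, n)); split; first by case.
    by apply/eqP; rewrite -leqn0; apply: rank_leq_row.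
  by move=> r' [k [M [_ <-]]]; apply: rank_leq_col.
exists k, M; split => // u Du.
pose C := col_mx M (rowv u).
have QC : Q (\rank C).
  exists (k + 1)%N, C; split => // l.
  case: (split_ordP l) => l' ->; first by rewrite rowKu.
  exists u; split => //; rewrite rowKd; apply/rowP => i; rewrite !mxE.
  by [] || rewrite (ord1 l').
have HC : (C <= M)%MS.
  have := mxrank_leqif_sup (sub_colmx M (rowv u)).
  move/geq_leqif <-; rewrite rM; exact: Hmax.
apply: submx_trans HC.
have -> : rowv u = row (rshift k (ord0 : 'I_1)) C.
  by apply/rowP => i; rewrite [LHS]mxE [RHS]mxE /C col_mxEd mxE.
exact: row_sub.
Qed.

Lemma clear_den (n : nat) (x : 'I_n -> rat) :
  exists (d : int) (z : 'I_n -> int), d != 0 /\ forall i, (z i)%:~R = x i * d%:~R.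
Proof.
exists (\prod_i denq (x i)), (fun i => numq (x i) * \prod_(j | j != i) denq (x j)).
split.
  by rewrite prodf_seq_neq0; apply/allP => i _; rewrite denq_neq0.
move=> i; rewrite [X in _ = _ * X%:~R](bigD1 i) //= !intrM mulrA -numqE.
by congr (_ * _); congr (_%:~R); apply: eq_bigl => j; rewrite andTb.
Qed.

Lemma kerQZ (m n : nat) (A : 'M[int]_(m, n)) (u : 'I_n -> int) :
  kerQ A (fun i => (u i)%:~R) <-> kerZ A u.
Proof.
have E j : \sum_(i < n) (A j i)%:~R * (u i)%:~R = (Aapp A u j)%:~R :> rat.
  by rewrite /Aapp rmorph_sum /=; apply: eq_bigr => i _; rewrite intrM.
split => H j; first by have := H j; rewrite E => /eqP; rewrite intr_eq0 => /eqP.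
by rewrite E H.
Qed.

Lemma construct (m n : nat) (A : 'M[int]_(m, n)) (D : ('I_n -> int) -> Prop) :
  span_proper A D ->
  exists m' (A' : 'M[int]_(m', n)), (forall u, D u -> kerZ A' u) /\
    (forall u, kerZ A' u -> kerZ A u) /\ exists u0, kerZ A u0 /\ ~ kerZ A' u0.
Proof.
move=> [Hsub [v [Hv nv]]].
have [k [M [HM HD]]] := fin_basis D.
have nvM : ~~ (\row_i v i <= M)%MS.
  apply/negP => /submxP [X EX]; apply: nv.
  have Hw l : exists w, D w /\ row l M = rowv w by apply: HM.
  pose w l := proj1_sig (constructive_indefinite_description _ (Hw l)).
  have Hw' l : D (w l) /\ row l M = rowv (w l).
    by rewrite /w; case: constructive_indefinite_description.
  exists k, (fun l => X 0 l), w; split; first by move=> l; case: (Hw' l).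
  move=> i; have := congr1 (fun R : 'rV[rat]_n => R 0 i) EX; rewrite /= !mxE => ->.
  apply: eq_bigr => l _; have := congr1 (fun R : 'rV[rat]_n => R 0 i) (proj2 (Hw' l)).
  by rewrite /= !mxE => ->.
rewrite submxE in nvM.
have [j Hj] : exists j, (\row_i v i *m cokermx M) 0 j != 0.
  apply: NNPP => H; move/negP: nvM; apply; apply/eqP/rowP => j; rewrite [RHS]mxE.
  by apply/eqP; apply: NNPP => Hj; apply: H; exists j; apply/negP.
pose col i := cokermx M i j.
have Hcol (x : 'I_n -> rat) : (\row_i x i *m cokermx M) 0 j = \sum_i x i * col i.
  by rewrite mxE; apply: eq_bigr => i _; rewrite mxE.
have [dc [zc [dc0 Hzc]]] := clear_den col.
have [dv [zv [dv0 Hzv]]] := clear_den v.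
pose A' := \matrix_(j0 < m.+1, i < n) (if unlift ord0 j0 is Some j' then A j' i else zc i).
have A'l u j' : Aapp A' u (lift ord0 j') = Aapp A u j'.
  by rewrite /Aapp; apply: eq_bigr => i _; rewrite mxE liftK.
have A'0 u : (Aapp A' u ord0)%:~R = dc%:~R * \sum_i (u i)%:~R * col i :> rat.
  rewrite /Aapp rmorph_sum mulr_sumr /=; apply: eq_bigr => i _.
  by rewrite mxE unlift_none intrM Hzc; ring.
have KA u : kerZ A' u -> kerZ A u by move=> H j'; rewrite -A'l.
exists m.+1, A'; split; last split => //.
  move=> u Du j0; case: (unliftP ord0 j0) => [j'|] ->.
    rewrite A'l; suff: kerZ A u by move=> ->.
    apply/kerQZ; apply: Hsub; exists 1%N, (fun _ => 1), (fun _ => u).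
    by split => // i; rewrite big_ord1 mul1r.
  apply/eqP; rewrite -(@intr_eq0 rat) A'0 -Hcol.
  have := HD u Du; rewrite /rowv => /submxP [X ->].
  by rewrite -mulmxA mulmx_coker mulmx0 mxE mulr0.
exists zv; split.
  apply/kerQZ => j'; rewrite (eq_bigr (fun i => dv%:~R * ((A j' i)%:~R * v i))).
    by rewrite -mulr_sumr Hv mulr0.
  by move=> i _; rewrite Hzv; ring.
move=> H; have := H ord0; move/(congr1 (fun z : int => z%:~R : rat)).
rewrite A'0 (eq_bigr (fun i => dv%:~R * (v i * col i))); last first.
  by move=> i _; rewrite Hzv; ring.
rewrite -mulr_sumr -Hcol /= => /eqP; rewrite !mulf_eq0 !intr_eq0 (negbTE dc0) (negbTE dv0).
by rewrite (negbTE Hj).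
Qed.
Lemma span_ker (m n : nat) (A : 'M[int]_(m, n)) (L : ('I_n -> int) -> Prop) v :
  (forall u, L u -> kerZ A u) -> spanQ L v -> kerQ A v.
Proof.
move=> HL [k [c [w [Hw Hv]]]] j.
rewrite (eq_bigr (fun i => \sum_(l < k) c l * ((A j i)%:~R * (w l i)%:~R))); last first.
  by move=> i _; rewrite Hv mulr_sumr; apply: eq_bigr => l _; ring.
rewrite exchange_big big1 // => l _; rewrite -mulr_sumr.
by have /kerQZ -> := HL _ (Hw l); rewrite mulr0.
Qed.


Section Main.
Variables (K : fieldType) (m n : nat) (A : 'M[int]_(m, n)).
Local Notation poly := {mpoly K[n]}.

Lemma span_mono (L L' : ('I_n -> int) -> Prop) v :
  (forall u, L u -> L' u) -> spanQ L v -> spanQ L' v.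
Proof. by move=> H [k [c [w [Hw Hv]]]]; exists k, c, w; split => // l; apply: H. Qed.

Lemma in_sum (s : nat) (I : 'I_s -> poly -> Prop) i p :
  (forall j, I j 0) -> I i p -> sum_ideals I p.
Proof.
move=> I0 Ip; exists (fun j => if j == i then p else 0); split.
  by move=> j; case: eqP => [->|]. 
by rewrite (bigD1 i) //= eqxx big1 ?addr0 // => j /negbTE ->.
Qed.

Variable Phi : (poly -> Prop) -> (poly -> Prop).
Hypothesis Phi_mono : forall J J' : poly -> Prop, (forall p, J p -> J' p) ->
  forall p, Phi J p -> Phi J' p.
Hypothesis Phi_inc : forall (J : poly -> Prop) p, J p -> Phi J p.
Hypothesis Phi_idem : forall (J : poly -> Prop) p, Phi (Phi J) p -> Phi J p.

Lemma Phi_ext J J' : same_set J J' -> same_set (Phi J) (Phi J').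
Proof. by move=> H p; split; apply: Phi_mono => q /H. Qed.

Lemma fwd (s : nat) :
  (exists I : 'I_s -> poly -> Prop,
       (forall i, is_toric_ideal (I i)) /\
       (forall i, ~ same_set (I i) (toric A)) /\
       same_set (toric A) (Phi (sum_ideals I))) ->
  exists (C : ('I_n -> int) -> Prop) (Cs : 'I_s -> ('I_n -> int) -> Prop),
       subset_of C (kerZ A) /\
       (same_set (Phi (ideal_gen (@binoms K n C))) (toric A) /\
        forall S', subset_of S' (@binoms K n C) -> same_set (Phi (ideal_gen S')) (toric A) ->
          subset_of (@binoms K n C) S') /\
       same_set C (fun u => exists i, Cs i u) /\
       (forall i, span_proper A (Cs i)).
Proof.
move=> [I [HI [Hne Hsum]]].
have I0 j : I j 0 by have [m' [A' [_ H]]] := HI j; apply/H; exact: toric0.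
have Isub i p : I i p -> toric A p.
  by move=> Ip; apply/Hsum; apply: Phi_inc; apply: in_sum Ip.
have E i : exists L : ('I_n -> int) -> Prop, exists gs : seq poly,
    (forall u, L u -> kerZ A u) /\ (forall q, q \in gs -> exists u, L u /\ q = binom K u) /\
    same_set (ideal_gen (fun q => q \in gs)) (I i) /\ exists v, kerQ A v /\ ~ spanQ L v.
  have [m' [A' [_ HA']]] := HI i.
  have [gs [Hgs Hgen]] := fin_gen K A'.
  have LA u : kerZ A' u -> kerZ A u.
    by move=> Hu; apply: (toric_binom (K := K)); apply: Isub; apply/HA'; apply: binom_toric.
  exists (kerZ A'), gs; split => //; split => //; split.
    by move=> f; rewrite Hgen HA'.
  case: (classic (forall v, kerQ A v -> kerQ A' v)) => Hv.
    case: (Hne i) => f; rewrite HA'; split; first exact: toric_sub.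
    by apply: toric_sub => u /kerQZ /Hv /kerQZ.
  have [v [Hv1 Hv2]] : exists v, kerQ A v /\ ~ kerQ A' v.
    by apply: NNPP => H; apply: Hv => v Av; apply: NNPP => nv; apply: H; exists v.
  by exists v; split => // /(span_ker (A := A')) H; apply: Hv2; apply: H.
pose L i := proj1_sig (constructive_indefinite_description _ (E i)).
have EL i : exists gs : seq poly,
    (forall u, L i u -> kerZ A u) /\ (forall q, q \in gs -> exists u, L i u /\ q = binom K u) /\
    same_set (ideal_gen (fun q => q \in gs)) (I i) /\ exists v, kerQ A v /\ ~ spanQ (L i) v.
  by rewrite /L; case: constructive_indefinite_description.
pose gs i := proj1_sig (constructive_indefinite_description _ (EL i)).
have Egs i : (forall u, L i u -> kerZ A u) /\
    (forall q, q \in gs i -> exists u, L i u /\ q = binom K u) /\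
    same_set (ideal_gen (fun q => q \in gs i)) (I i) /\ exists v, kerQ A v /\ ~ spanQ (L i) v.
  by rewrite /gs; case: constructive_indefinite_description.
pose G0 := flatten [seq gs i | i <- enum 'I_s].
have inG0 p : p \in G0 <-> exists i, p \in gs i.
  split; first by case/flattenP => _ /mapP [i _ ->] pi; exists i.
  by case=> i pi; apply/flattenP; exists (gs i) => //; apply: map_f; rewrite mem_enum.
have G0sum : same_set (ideal_gen (fun q => q \in G0)) (sum_ideals I).
  move=> f; split.
    move/(ig_decomp (Si := fun i q => q \in gs i)); case.
      by move=> p /inG0.
    move=> g [Hg ->]; exists g; split => // i.
    by have [_ [_ [H _]]] := Egs i; apply/H.
  move=> [g [Hg ->]]; apply: ig_sum => i _.
  have [_ [_ [H _]]] := Egs i; move/H: (Hg i); apply: ig_mono => p pi.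
  by apply/inG0; exists i.
pose P (S : poly -> Prop) := same_set (Phi (ideal_gen S)) (toric A).
have Pext S1 S2 : (forall x, S1 x <-> S2 x) -> P S1 -> P S2.
  by move=> H HS f; rewrite -HS; apply: Phi_ext; apply: ig_ext => x; rewrite H.
have PG0 : P (fun q => q \in G0).
  by move=> f; rewrite Hsum; apply: Phi_ext.
have [S [SG0 [PS Smin]]] := min_sub Pext PG0.
pose C u := (exists i, L i u) /\ S (binom K u).
pose Cs i u := L i u /\ S (binom K u).
have BC : same_set (@binoms K n C) S.
  move=> p; split; first by case=> u [[_ Su] ->].
  move=> Sp; have /inG0 [i pi] := SG0 p Sp.
  have [_ [H _]] := Egs i; have [u [Lu Ep]] := H p pi.
  by exists u; split => //; split; [exists i | rewrite -Ep].
exists C, Cs; split; last split; last split.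
- by move=> u [[i Lu] _]; have [H _] := Egs i; apply: H.
- split; first by apply: Pext PS => x; rewrite BC.
  move=> S' HS' PS' p /BC Sp.
  by apply: (Smin S') => // x /HS' /BC.
- by move=> u; split => [[[i Lu] Su]|[i [Lu Su]]]; [exists i | split => //; exists i].
- move=> i; have [HL [_ [_ [v [Hv nv]]]]] := Egs i; split.
    by move=> w; apply: span_ker => u [Lu _]; apply: HL.
  by exists v; split => //; apply: contra_not nv; apply: span_mono => u [].
Qed.

Lemma bwd (s : nat) : pointed A ->
  (exists (C : ('I_n -> int) -> Prop) (Cs : 'I_s -> ('I_n -> int) -> Prop),
       subset_of C (kerZ A) /\
       same_set (Phi (ideal_gen (@binoms K n C))) (toric A) /\
       same_set C (fun u => exists i, Cs i u) /\
       (forall i, span_proper A (Cs i))) ->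
  exists I : 'I_s -> poly -> Prop,
       (forall i, is_toric_ideal (I i)) /\
       (forall i, ~ same_set (I i) (toric A)) /\
       same_set (toric A) (Phi (sum_ideals I)).
Proof.
move=> hA [C [Cs [HC [Hgen [Hun Hsp]]]]].
have Hc i := construct (Hsp i).
pose mi i := proj1_sig (constructive_indefinite_description _ (Hc i)).
have Hmi i : exists A' : 'M[int]_(mi i, n), (forall u, Cs i u -> kerZ A' u) /\
    (forall u, kerZ A' u -> kerZ A u) /\ exists u0, kerZ A u0 /\ ~ kerZ A' u0.
  by rewrite /mi; case: constructive_indefinite_description.
pose Ai i := proj1_sig (constructive_indefinite_description _ (Hmi i)).
have HAi i : (forall u, Cs i u -> kerZ (Ai i) u) /\
    (forall u, kerZ (Ai i) u -> kerZ A u) /\ exists u0, kerZ A u0 /\ ~ kerZ (Ai i) u0.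
  by rewrite /Ai; case: constructive_indefinite_description.
exists (fun i (f : poly) => toric (Ai i) f); split; last split.
- move=> i; exists (mi i), (Ai i); split => //.
  have [_ [H _]] := HAi i.
  by move=> u /H; apply: hA.
- move=> i Heq; have [_ [_ [u0 [H1 H2]]]] := HAi i; apply: H2.
  apply: (toric_binom (K := K)); apply/Heq; exact: binom_toric.
have sum_sub f : sum_ideals (fun i (f : poly) => toric (Ai i) f) f -> toric A f.
  move=> [g [Hg ->]]; elim/big_ind: _ => //; [exact: toric0 | exact: toricD|].
  move=> i _; apply: toric_sub (Hg i); by have [_ [H _]] := HAi i.
have ig_sum_in f : ideal_gen (@binoms K n C) f ->
    sum_ideals (fun i (f : poly) => toric (Ai i) f) f.
  move/(ig_decomp (Si := fun i => @binoms K n (Cs i))); case.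
    by move=> p [u [Cu ->]]; have /Hun [i Ciu] := Cu; exists i, u.
  move=> g [Hg ->]; exists g; split => // i; apply: ig_toric (Hg i).
  by move=> p [u [Cu ->]]; apply: binom_toric; have [H _] := HAi i; apply: H.
move=> f; split.
  by move/Hgen; apply: Phi_mono.
move/(Phi_mono sum_sub) => H; apply/Hgen; apply: Phi_idem.
by apply: Phi_mono H => p /Hgen.
Qed.
End Main.
Unset Implicit Arguments.
Theorem theorem2p1 (K : fieldType) (m n : nat) (A : 'M[int]_(m, n))
    (hA : pointed A) (s : nat) (hs : (1 <= s)%N) :
  ((exists I : 'I_s -> {mpoly K[n]} -> Prop,
       (forall i, is_toric_ideal (I i)) /\
       (forall i, ~ same_set (I i) (toric A)) /\
       same_set (toric A) (sum_ideals I))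
   <->
   (exists (C : ('I_n -> int) -> Prop) (Cs : 'I_s -> ('I_n -> int) -> Prop),
       subset_of C (kerZ A) /\
       min_bin_gens (@binoms K n C) (toric A) /\
       same_set C (fun u => exists i, Cs i u) /\
       (forall i, span_proper A (Cs i))))
  /\
  ((exists I : 'I_s -> {mpoly K[n]} -> Prop,
       (forall i, is_toric_ideal (I i)) /\
       (forall i, ~ same_set (I i) (toric A)) /\
       same_set (toric A) (radI (sum_ideals I)))
   <->
   (exists (C : ('I_n -> int) -> Prop) (Cs : 'I_s -> ('I_n -> int) -> Prop),
       subset_of C (kerZ A) /\
       min_bin_gens_rad (@binoms K n C) (toric A) /\
       same_set C (fun u => exists i, Cs i u) /\
       (forall i, span_proper A (Cs i)))).
Proof.
have idm : forall J J' : {mpoly K[n]} -> Prop, (forall p, J p -> J' p) ->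
  forall p, (fun J => J) J p -> (fun J => J) J' p by move=> J J' H p /H.
have idi : forall (J : {mpoly K[n]} -> Prop) p, J p -> (fun J => J) J p by [].
have idd : forall (J : {mpoly K[n]} -> Prop) p, (fun J => J) ((fun J => J) J) p -> (fun J => J) J p by [].
have rm : forall J J' : {mpoly K[n]} -> Prop, (forall p, J p -> J' p) ->
  forall p, radI J p -> radI J' p by move=> J J' H p [k /H Hk]; exists k.
have ri : forall (J : {mpoly K[n]} -> Prop) p, J p -> radI J p.
  by move=> J p Jp; exists 1%N; rewrite expr1.
have rd : forall (J : {mpoly K[n]} -> Prop) p, radI (radI J) p -> radI J p.
  by move=> J p [k [j Hj]]; exists (k * j)%N; rewrite exprM.
split; split.
- move=> H; have [C [Cs [H1 [[H2 H3] [H4 H5]]]]] := fwd (A := A) (Phi := fun J => J) idm idi H.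
  by exists C, Cs; split => //; split => //; split.
- move=> [C [Cs [H1 [[H2 _] [H4 H5]]]]].
  by apply: (bwd (A := A) (Phi := fun J => J) idm idd hA); exists C, Cs.
- move=> H; have [C [Cs [H1 [[H2 H3] [H4 H5]]]]] := fwd (A := A) (Phi := @radI K n) rm ri H.
  by exists C, Cs; split => //; split => //; split.
- move=> [C [Cs [H1 [[H2 _] [H4 H5]]]]].
  by apply: (bwd (A := A) (Phi := @radI K n) rm rd hA); exists C, Cs.
Qed.
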